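(* Every almost periodic sequence has the universal joint repetition property. That is, if $a:\mathbb{Z}\to\mathbb{C}$ is almost periodic, then for every metric space $\tilde\Omega$ and every sequence $\{\tilde\omega_n\}_{n\ge0}$ in $\tilde\Omega$ with the repetition property, the sequences $\{a(n)\}_{n\ge0}$ (in $\mathbb{C}$) and $\{\tilde\omega_n\}_{n\ge0}$ have the joint repetition property.
   Context: $a:\mathbb{Z}\to\mathbb{C}$ is almost periodic if its set of translates $\{a(\cdot+m):m\in\mathbb{Z}\}$ is relatively compact in $\ell^\infty(\mathbb{Z})$. $\mathbb{Z}_+=\{1,2,\ldots\}$. A sequence $\{\omega_n\}_{n\ge0}$ in a metric space $\Omega$ has the repetition property if for every $\varepsilon>0$ and $r \in \mathbb{Z}_+$ there exists $q \in \mathbb{Z}_+$ such that $\mathrm{dist}(\omega_n,\omega_{n+q}) < \varepsilon$ for $n = 0,1,\ldots, rq$. A family of sequences (possibly in different metric spaces) has the joint repetition property if each of them has the repetition property and, for each finite subfamily and each $\varepsilon>0$, $r\in\mathbb{Z}_+$, a single $q\in\mathbb{Z}_+$ can be chosen that works simultaneously for all sequences in the subfamily. A sequence $\{\omega_n\}$ in a metric space has the universal joint repetition property if it has the joint repetition property with every sequence (in any metric space) that has the repetition property. $\mathbb{C}$ carries its usual metric. *)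

(* Defs.v *)
From Stdlib Require Import Reals ZArith Lra Psatz.
Open Scope R_scope.

Record MetricSpace : Type := {
  mcarrier :> Type;
  mdist : mcarrier -> mcarrier -> R;
  mdist_nonneg : forall x y, 0 <= mdist x y;
  mdist_eq0 : forall x y, mdist x y = 0 <-> x = y;
  mdist_sym : forall x y, mdist x y = mdist y x;
  mdist_tri : forall x y z, mdist x z <= mdist x y + mdist y z
}.

Definition Cplx : Type := (R * R)%type.
Definition Cdist (z w : Cplx) : R :=
  sqrt ((fst z - fst w) ^ 2 + (snd z - snd w) ^ 2).

Definition Zbounded (f : Z -> Cplx) : Prop :=
  exists M : R, forall m : Z, Cdist (f m) (0, 0) <= M.

Definition linf_converges (f : nat -> Z -> Cplx) (g : Z -> Cplx) : Prop :=
  forall eps, 0 < eps -> exists K : nat, forall k, (K <= k)%nat ->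
    exists e', e' < eps /\ forall m : Z, Cdist (f k m) (g m) <= e'.

(** Almost periodic: a is in l^infty(Z) and the set of its translates is
    relatively compact in l^infty(Z), i.e. (metric space) every sequence of
    translates has a subsequence converging in l^infty(Z). *)
Definition almost_periodic (a : Z -> Cplx) : Prop :=
  Zbounded a /\
  forall ms : nat -> Z,
    exists phi : nat -> nat, (forall k, (phi k < phi (S k))%nat) /\
    exists g : Z -> Cplx, Zbounded g /\
      linf_converges (fun k m => a (m + ms (phi k))%Z) g.

Definition repetition_property {X : MetricSpace} (w : nat -> X) : Prop :=
  forall eps, 0 < eps -> forall r : nat, (1 <= r)%nat ->
    exists q : nat, (1 <= q)%nat /\
      forall n : nat, (n <= r * q)%nat -> mdist X (w n) (w (n + q)%nat) < eps.

(** Joint repetition property of a family of two sequences (the only finite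
    subfamilies are the singletons, handled by the individual repetition
    properties, and the whole pair). *)
Definition joint_repetition_property2 {X Y : MetricSpace}
  (w1 : nat -> X) (w2 : nat -> Y) : Prop :=
  repetition_property w1 /\ repetition_property w2 /\
  forall eps, 0 < eps -> forall r : nat, (1 <= r)%nat ->
    exists q : nat, (1 <= q)%nat /\
      forall n : nat, (n <= r * q)%nat ->
        mdist X (w1 n) (w1 (n + q)%nat) < eps /\
        mdist Y (w2 n) (w2 (n + q)%nat) < eps.

Definition universal_joint_repetition_property {X : MetricSpace}
  (w : nat -> X) : Prop :=
  forall (Y : MetricSpace) (v : nat -> Y),
    repetition_property v -> joint_repetition_property2 w v.

Lemma euclid_tri (a b c d : R) : sqrt ((a+c)^2 + (b+d)^2) <= sqrt (a^2+b^2) + sqrt (c^2+d^2).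
Proof.
  assert (H1 := sqrt_pos (a^2+b^2)). assert (H2 := sqrt_pos (c^2+d^2)).
  assert (E1 : sqrt (a^2+b^2) * sqrt (a^2+b^2) = a^2+b^2) by (apply sqrt_sqrt; nra).
  assert (E2 : sqrt (c^2+d^2) * sqrt (c^2+d^2) = c^2+d^2) by (apply sqrt_sqrt; nra).
  rewrite <- (sqrt_square (sqrt (a^2+b^2) + sqrt (c^2+d^2))) by lra.
  apply sqrt_le_1_alt.
  assert (CS : a*c + b*d <= sqrt (a^2+b^2) * sqrt (c^2+d^2)).
  { destruct (Rle_dec (a*c+b*d) 0). nra.
    assert (P := Rmult_le_pos _ _ H1 H2).
    apply Rsqr_incr_0_var; unfold Rsqr; try lra.
    replace (sqrt (a ^ 2 + b ^ 2) * sqrt (c ^ 2 + d ^ 2) * (sqrt (a ^ 2 + b ^ 2) * sqrt (c ^ 2 + d ^ 2))) with ((a^2+b^2)*(c^2+d^2)) by (rewrite <- E1 at 1; rewrite <- E2 at 1; ring).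
    assert (0 <= (a*d-b*c)^2) by (apply pow2_ge_0). nra. }
  nra.
Qed.

Lemma Cdist_nonneg : forall x y, 0 <= Cdist x y.
Proof. intros; unfold Cdist; apply sqrt_pos. Qed.

Lemma Cdist_eq0 : forall x y, Cdist x y = 0 <-> x = y.
Proof.
  intros [a b] [c d]; unfold Cdist; simpl; split.
  - intro H. apply sqrt_eq_0 in H; [|assert (Ha := pow2_ge_0 (a - c)); assert (Hb := pow2_ge_0 (b - d)); lra].
    assert (Ha := pow2_ge_0 (a - c)). assert (Hb := pow2_ge_0 (b - d)).
    assert (Ha' : (a - c) ^ 2 = 0) by lra. assert (Hb' : (b - d) ^ 2 = 0) by lra.
    simpl in Ha', Hb'. rewrite Rmult_1_r in Ha', Hb'. apply Rmult_integral in Ha'. apply Rmult_integral in Hb'.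
    f_equal; [destruct Ha'|destruct Hb']; lra.
  - intro H; inversion H; subst.
    match goal with |- sqrt ?e = 0 => replace e with 0 by ring end; exact sqrt_0.
Qed.

Lemma Cdist_sym : forall x y, Cdist x y = Cdist y x.
Proof. intros [a b] [c d]; unfold Cdist; simpl; f_equal; ring. Qed.

Lemma Cdist_tri : forall x y z, Cdist x z <= Cdist x y + Cdist y z.
Proof.
  intros [a b] [c d] [e f]; unfold Cdist; simpl.
  replace (a - e) with ((a - c) + (c - e)) by ring.
  replace (b - f) with ((b - d) + (d - f)) by ring.
  apply euclid_tri.
Qed.

Definition Cmetric : MetricSpace :=
  {| mcarrier := Cplx; mdist := Cdist; mdist_nonneg := Cdist_nonneg;
     mdist_eq0 := Cdist_eq0; mdist_sym := Cdist_sym; mdist_tri := Cdist_tri |}.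

(* Main.v *)
Require Import Defs.
From Stdlib Require Import Reals ZArith.
From Stdlib Require Import Lra Lia Psatz Classical ClassicalEpsilon.
Open Scope R_scope.

Fixpoint Gseq (F : nat -> (nat -> Z) -> Z) (n : nat) : nat -> Z :=
  match n with
  | O => fun _ => 0%Z
  | S n' => fun i => if Nat.ltb i n' then Gseq F n' i else F n' (Gseq F n')
  end.

Lemma Gseq_stable F : forall n i, (i < n)%nat -> Gseq F n i = Gseq F (S i) i.
Proof.
  induction n; intros i Hi; [lia|].
  simpl. destruct (Nat.ltb_spec i n).
  - apply IHn; auto.
  - assert (i = n) by lia. subst. rewrite Nat.ltb_irrefl. reflexivity.
Qed.

Lemma ap_net a : almost_periodic a -> forall d, 0 < d ->
  exists N (c : nat -> Z), forall m : Z, exists i, (i < N)%nat /\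
    forall k : Z, Cdist (a (k + m)%Z) (a (k + c i)%Z) <= d.
Proof.
  intros [_ Hc] d Hd. apply NNPP; intro Hn.
  assert (H : forall N (c : nat -> Z), exists m, forall i, (i < N)%nat ->
            exists k, Cdist (a (k + m)%Z) (a (k + c i)%Z) > d).
  { intros N c. apply NNPP; intro H1. apply Hn. exists N, c. intro m.
    apply NNPP; intro H2. apply H1. exists m. intros i Hi.
    apply NNPP; intro H3. apply H2. exists i. split; auto. intro k.
    apply Rnot_gt_le. intro. apply H3. exists k; auto. }
  pose (F := fun N c => proj1_sig (constructive_indefinite_description _ (H N c))).
  assert (HF : forall N c i, (i < N)%nat ->
     exists k, Cdist (a (k + F N c)%Z) (a (k + c i)%Z) > d).
  { intros N c. unfold F. destruct (constructive_indefinite_description _ _). simpl. auto. }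
  pose (s := fun n => Gseq F (S n) n).
  assert (Hs : forall n i, (i < n)%nat -> exists k, Cdist (a (k + s n)%Z) (a (k + s i)%Z) > d).
  { intros n i Hi. destruct (HF n (Gseq F n) i Hi) as [k Hk]. exists k.
    assert (E1 : s n = F n (Gseq F n)) by (unfold s; simpl; rewrite Nat.ltb_irrefl; reflexivity).
    assert (E2 : s i = Gseq F n i) by (unfold s; symmetry; apply Gseq_stable; exact Hi).
    rewrite E1, E2. exact Hk. }
  destruct (Hc s) as [phi [Hphi [g [_ Hconv]]]].
  destruct (Hconv (d/2)) as [K HK]; [lra|].
  destruct (HK K (le_n _)) as [e1 [He1 H1]].
  destruct (HK (S K) (le_S _ _ (le_n _))) as [e2 [He2 H2]].
  destruct (Hs (phi (S K)) (phi K) (Hphi K)) as [k Hk].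
  specialize (H1 k). specialize (H2 k). simpl in H1, H2.
  assert (T := Cdist_tri (a (k + s (phi (S K)))%Z) (g k) (a (k + s (phi K)))%Z).
  rewrite (Cdist_sym (g k)) in T. lra.
Qed.

Lemma pigeon : forall N (P : nat -> nat -> Prop),
  (forall j, (j <= N)%nat -> exists i, (i < N)%nat /\ P j i) ->
  exists j1 j2 i, (j1 < j2 <= N)%nat /\ P j1 i /\ P j2 i.
Proof.
  induction N; intros P HP.
  - destruct (HP 0%nat) as [i [Hi _]]; lia.
  - destruct (HP (S N)) as [i0 [Hi0 HPi0]]; [lia|].
    destruct (classic (exists j, (j <= N)%nat /\ P j i0)) as [[j [Hj HPj]] | Hno].
    + exists j, (S N), i0; repeat split; auto; lia.
    + set (P' := fun j i => (i <> i0 /\ P j i) \/ (i = i0 /\ P j N)).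
      destruct (IHN P') as [j1 [j2 [i [Hj [H1 H2]]]]].
      * intros j Hj. destruct (HP j) as [i [Hi HPi]]; [lia|].
        assert (i <> i0) by (intro; subst; apply Hno; eauto).
        destruct (Nat.eq_dec i N).
        -- subst. exists i0. split; [lia | right; auto].
        -- exists i; split; [lia | left; auto].
      * unfold P' in *.
        destruct H1 as [[? ?]|[? ?]]; destruct H2 as [[? ?]|[? ?]].
        -- exists j1, j2, i; repeat split; auto; lia.
        -- contradiction.
        -- contradiction.
        -- exists j1, j2, N; repeat split; auto; lia.
Qed.

Lemma v_mult (Y : MetricSpace) (v : nat -> Y) q e Rq :
  (forall n, (n <= Rq)%nat -> mdist Y (v n) (v (n+q)%nat) < e) ->
  forall j n, (n + j*q <= Rq)%nat -> mdist Y (v n) (v (n + j*q)%nat) <= INR j * e.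
Proof.
  intros Hq. induction j; intros n Hn.
  - replace (n + 0*q)%nat with n by lia. simpl.
    rewrite (proj2 (mdist_eq0 Y _ _) eq_refl). lra.
  - assert (T := mdist_tri Y (v n) (v (n + j*q)%nat) (v (n + S j * q)%nat)).
    replace (n + S j * q)%nat with ((n + j*q) + q)%nat in * by lia.
    assert (A := IHj n ltac:(lia)). assert (B := Hq (n + j*q)%nat ltac:(lia)).
    rewrite S_INR. lra.
Qed.

Lemma core a (Hap : almost_periodic a) (Y : MetricSpace) (v : nat -> Y)
  (Hv : repetition_property v) eps (He : 0 < eps) r (Hr : (1 <= r)%nat) :
  exists q, (1 <= q)%nat /\ forall n, (n <= r*q)%nat ->
    Cdist (a (Z.of_nat n)) (a (Z.of_nat (n+q))) < eps /\ mdist Y (v n) (v (n+q)%nat) < eps.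
Proof.
  destruct (ap_net a Hap (eps/3)) as [N [c Hc]]; [lra|].
  assert (HN := pos_INR N).
  set (e' := eps / (INR N + 1)).
  assert (He' : 0 < e') by (unfold e'; apply Rdiv_lt_0_compat; lra).
  destruct (Hv e' He' ((r+1)*N+1)%nat ltac:(lia)) as [q [Hq1 Hq]].
  destruct (pigeon N (fun j i => forall k, Cdist (a (k + Z.of_nat (j*q))%Z) (a (k + c i)%Z) <= eps/3))
    as [j1 [j2 [i [Hj [H1 H2]]]]].
  { intros j _. destruct (Hc (Z.of_nat (j*q))) as [i [Hi Hk]]. eauto. }
  exists ((j2 - j1) * q)%nat. split; [nia|].
  intros n Hn. split.
  - set (k := (Z.of_nat n - Z.of_nat (j1*q))%Z). specialize (H1 k). specialize (H2 k).
    assert (E1 : (k + Z.of_nat (j1*q))%Z = Z.of_nat n) by (unfold k; lia).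
    assert (E2 : (k + Z.of_nat (j2*q))%Z = Z.of_nat (n + (j2-j1)*q)).
    { unfold k. rewrite !Nat2Z.inj_add, !Nat2Z.inj_mul, Nat2Z.inj_sub by lia. ring. }
    rewrite E1 in H1. rewrite E2 in H2.
    assert (T := Cdist_tri (a (Z.of_nat n)) (a (k + c i)%Z) (a (Z.of_nat (n + (j2 - j1) * q)))).
    rewrite (Cdist_sym (a (k + c i)%Z)) in T. lra.
  - assert (A := v_mult Y v q e' (((r+1)*N+1)*q) Hq (j2-j1) n ltac:(nia)).
    assert (B : INR (j2 - j1) <= INR N) by (apply le_INR; lia).
    assert (C : INR (j2 - j1) * e' <= INR N * e') by (apply Rmult_le_compat_r; lra).
    assert (D : INR N * e' = eps - e') by (unfold e'; field; lra).
    lra.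
Qed.

Theorem theoremA1 :
  forall a : Z -> Cplx, almost_periodic a ->
    universal_joint_repetition_property (X := Cmetric)
      (fun n : nat => a (Z.of_nat n)).
Proof.
  intros a Hap Y v Hv. unfold joint_repetition_property2.
  split; [|split; [exact Hv|]].
  - intros eps He r Hr. destruct (core a Hap Y v Hv eps He r Hr) as [q [Hq H]].
    exists q; split; auto. intros n Hn. exact (proj1 (H n Hn)).
  - intros eps He r Hr. destruct (core a Hap Y v Hv eps He r Hr) as [q [Hq H]].
    exists q; split; auto.
Qed.
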